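(* Let $G$ be a connected graph with at least one edge. Then $\mathrm{ldim}_f(K_2\square G)\leq \mathrm{ldim}_f(G)$.
   Context: All graphs are finite, simple and connected; $d$ is the shortest-path distance. For an edge $uv$ of a graph $X$, $L_X(uv)=\{x\in V(X): d_X(u,x)\neq d_X(v,x)\}$. A function $f:V(X)\to[0,1]$ is a local resolving function of $X$ if $\sum_{x\in L_X(uv)}f(x)\geq 1$ for every edge $uv$; $\mathrm{ldim}_f(X)$ is the minimum of $\sum_{v}f(v)$ over all local resolving functions. $K_2$ is the complete graph on two vertices. The Cartesian product $G\square H$ has vertex set $V(G)\times V(H)$, with $(u_1,v_1)$ adjacent to $(u_2,v_2)$ iff ($u_1u_2\in E(G)$ and $v_1=v_2$) or ($u_1=u_2$ and $v_1v_2\in E(H)$). *)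

(* Defs.v *)
From Stdlib Require Import Reals ClassicalEpsilon.
From mathcomp Require Import all_boot.
Set Implicit Arguments. Unset Strict Implicit. Unset Printing Implicit Defensive.

Definition simple_graph (T : finType) (e : rel T) : Prop :=
  symmetric e /\ irreflexive e.

Definition connected_graph (T : finType) (e : rel T) : Prop :=
  forall x y : T, connect e x y.

Fixpoint within (T : finType) (e : rel T) (k : nat) (x y : T) : bool :=
  match k with
  | 0 => x == y
  | k'.+1 => within e k' x y || [exists z, within e k' x z && e z y]
  end.

(* Shortest-path distance: least k with a walk of length <= k
   (for connected graphs this is < #|T|). *)
Definition gdist (T : finType) (e : rel T) (x y : T) : nat :=
  find (fun k => within e k x y) (iota 0 #|T|).

Definition Lset (T : finType) (e : rel T) (u v : T) : pred T :=
  fun x => gdist e u x != gdist e v x.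

Definition Rsum (T : finType) (P : pred T) (f : T -> R) : R :=
  \big[Rplus/R0]_(x | P x) f x.

Definition local_resolving_function (T : finType) (e : rel T) (f : T -> R) : Prop :=
  (forall x, Rle R0 (f x) /\ Rle (f x) R1) /\
  (forall u v, e u v -> Rle R1 (Rsum (Lset e u v) f)).

Definition is_glb (S : R -> Prop) (m : R) : Prop :=
  (forall s, S s -> Rle m s) /\
  (forall b, (forall s, S s -> Rle b s) -> Rle b m).

(* ldim_f(X): the minimum (= infimum, which is attained) of sum_v f(v)
   over all local resolving functions f of X. *)
Definition ldimf (T : finType) (e : rel T) : R :=
  epsilon (inhabits R0)
    (is_glb (fun s => exists f, local_resolving_function e f /\
                                s = Rsum predT f)).

(* Cartesian product K_2 □ G, vertex set bool * T (bool = V(K_2)). *)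
Definition K2_prod_rel (T : finType) (e : rel T) : rel (bool * T) :=
  fun p q => ((p.1 != q.1) && (p.2 == q.2)) || ((p.1 == q.1) && e p.2 q.2).

(* Main.v *)
Require Import Defs.
From Stdlib Require Import Reals.
From mathcomp Require Import all_boot.
From HB Require Import structures.
From Stdlib Require Import Lra ClassicalEpsilon.
From mathcomp Require Import zify.

Section G.
Variables (T : finType) (e : rel T).

Lemma within_S k x y : within e k x y -> within e k.+1 x y.
Proof. by move=> h /=; rewrite h. Qed.

Lemma within_mono k m x y : k <= m -> within e k x y -> within e m x y.
Proof.
elim: m => [|m IH]; first by rewrite leqn0 => /eqP ->.
rewrite leq_eqVlt => /orP [/eqP <- //| hk] h.
exact/within_S/IH.
Qed.

Lemma within_step k x z y : within e k x z -> e z y -> within e k.+1 x y.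
Proof. move=> h1 h2 /=; apply/orP; right; apply/existsP; exists z; by rewrite h1. Qed.

Lemma path_within x p : path e x p -> within e (size p) x (last x p).
Proof.
elim/last_ind: p => [|p z IH] /=; first by [].
rewrite rcons_path size_rcons last_rcons => /andP [hp hz].
exact: within_step (IH hp) hz.
Qed.

Lemma connect_within x y : connect e x y -> exists2 k, k < #|T| & within e k x y.
Proof.
move=> /connectP [p hp ->].
case: (shortenP hp) => p' hp' hu _.
exists (size p'); last exact: path_within.
have := max_card (mem (x :: p')). by rewrite (card_uniqP hu).
Qed.

Lemma gdist_spec x y : (exists2 k, k < #|T| & within e k x y) ->
  [/\ gdist e x y < #|T|, within e (gdist e x y) x y &
     forall j, j < gdist e x y -> ~~ within e j x y].
Proof.
move=> [k hk hw].
have hh : has (fun k => within e k x y) (iota 0 #|T|).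
  apply/hasP; exists k => //; by rewrite mem_iota.
have hlt : gdist e x y < #|T| by rewrite /gdist -{2}(size_iota 0 #|T|) -has_find.
split=> //.
  have := nth_find 0 hh; by rewrite nth_iota.
move=> j hj; have := before_find 0 hj; rewrite nth_iota ?add0n ?hh //.
  by move=> ->. 
exact: ltn_trans hj hlt.
Qed.

Lemma gdist_eq x y k : k < #|T| -> within e k x y ->
  (forall j, j < k -> ~~ within e j x y) -> gdist e x y = k.
Proof.
move=> hk hw hmin.
have [h1 h2 h3] := gdist_spec x y (ex_intro2 _ _ k hk hw).
case: (ltngtP (gdist e x y) k) => // h.
  by move: (hmin _ h); rewrite h2.
by move: (h3 _ h); rewrite hw.
Qed.
End G.

Section P.
Variables (T : finType) (e : rel T).
Local Notation E := (K2_prod_rel e).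

Lemma withinE k a x b y : within E k (a, x) (b, y) =
  ((a != b) <= k) && within e (k - (a != b)) x y.
Proof.
elim: k a x b y => [|k IH] a x b y.
  by case: a; case: b.
apply/idP/idP.
- move=> /= /orP [h|/existsP [[c z] /andP [h1 h2]]].
    move: h; rewrite IH => /andP [h1 h2]; apply/andP; split; first by lia.
    apply: within_mono h2; lia.
  move: h1; rewrite IH => /andP [h1 h3].
  move: h2; rewrite /K2_prod_rel /= => /orP [/andP [hcb /eqP hzy]|/andP [/eqP hcb hzy]].
    subst z; move: h1 h3 hcb; case: a; case: b; case: c => //= h1 h3 _;
      rewrite ?subn0 ?subn1 /= in h3 *; try done; apply/orP; left; apply: within_mono h3; lia.
  subst c; apply/andP; split; first by lia.
  have -> : k.+1 - (a != b) = (k - (a != b)).+1 by lia.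
  exact: within_step h3 hzy.
- move=> /andP [h1 h2].
  case: (boolP (a == b)) h1 h2 => hab h1 h2.
    move/eqP: hab => hab; subst b; move: h2; rewrite /= ?subn0 /=.
    move=> /orP [h|/existsP [z /andP [h3 h4]]].
      by apply: within_S; rewrite IH eqxx /= subn0.
    apply: (@within_step _ _ k _ (a, z)); first by rewrite IH eqxx /= subn0.
    by rewrite /K2_prod_rel /= eqxx h4 orbT.
  move: h2; rewrite /= ?subn1 /= => h2.
  apply: (@within_step _ _ k _ (a, y)); first by rewrite IH eqxx /= subn0.
  by rewrite /K2_prod_rel /= hab eqxx.
Qed.

Lemma gdistE a x b y : (exists2 k, k < #|T| & within e k x y) ->
  gdist E (a, x) (b, y) = (a != b) + gdist e x y.
Proof.
move=> hex; have [h1 h2 h3] := @gdist_spec T e x y hex.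
have hb := leq_b1 (a != b).
apply: gdist_eq.
- rewrite card_prod card_bool; move: (a != b) hb => c hb.
  move: (gdist e x y) h1 => g h1; lia.
- rewrite withinE; apply/andP; split; first by rewrite leq_addr.
  by rewrite addKn.
- move=> j hj; rewrite withinE; apply/negP => /andP [h4 h5].
  have := h3 (j - (a != b)); rewrite h5; move=> /(_ _) /negP; apply.
  move: (a != b) hb hj h4 => c hb hj h4; move: (gdist e x y) hj => g hj; lia.
all: by [].
Qed.
End P.

Lemma RplusA : associative Rplus. Proof. by move=> *; rewrite Rplus_assoc. Qed.
HB.instance Definition _ := Monoid.isComLaw.Build R R0 Rplus RplusA Rplus_comm Rplus_0_l.

Section S.
Variable T : finType.

Lemma Rsum_mk (P : pred T) f : Rsum P f = \big[Rplus/R0]_(x : T) (if P x then f x else R0).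
Proof. by rewrite /Rsum big_mkcond. Qed.

Lemma Rsum_ge0 (P : pred T) f : (forall x, Rle R0 (f x)) -> Rle R0 (Rsum P f).
Proof.
move=> h; rewrite /Rsum; apply: (big_ind (fun s => Rle R0 s)) => //; first lra.
by move=> a b ha hb; lra.
Qed.

Lemma Rsum_sub (P Q : pred T) f : (forall x, P x -> Q x) -> (forall x, Rle R0 (f x)) ->
  Rle (Rsum P f) (Rsum Q f).
Proof.
move=> hPQ h; rewrite !Rsum_mk; apply: (big_ind2 (fun s t => Rle s t)); first lra.
  by move=> ? ? ? ? ? ?; lra.
move=> i _; case: (boolP (P i)) => hp; first by rewrite hPQ //; lra.
by case: (Q i); [apply: h| lra].
Qed.

Lemma Rsum_term (P : pred T) f u : P u -> (forall x, Rle R0 (f x)) -> Rle (f u) (Rsum P f).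
Proof.
move=> hu h; rewrite /Rsum (bigD1 u) //=.
have := @Rsum_ge0 (fun x => P x && (x != u)) f h; rewrite /Rsum; lra.
Qed.
End S.

Lemma Rsum_prod (T : finType) (P : pred (bool * T)) (f : T -> R) :
  Rsum P (fun p => if p.1 then f p.2 else R0) = Rsum (fun z => P (true, z)) f.
Proof.
rewrite !Rsum_mk.
rewrite (eq_bigr (fun p => (fun (b : bool) (z : T) => if P (b, z) then (if b then f z else R0) else R0) p.1 p.2)); last by case.
rewrite -(pair_big xpredT xpredT (fun b z => if P (b, z) then (if b then f z else R0) else R0)) /=.
rewrite big_bool /= [X in Rplus _ X]big1; first exact: Rplus_0_r.
by move=> i _; case: (P _).
Qed.

Section GLB.
Local Open Scope R_scope.
Lemma glb_ex (S : R -> Prop) : (exists s, S s) -> (forall s, S s -> Rle R0 s) ->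
  exists m, is_glb S m.
Proof.
move=> [s0 hs0] hlb.
have hb : bound (fun x => S (- x)).
  exists R0 => x hx; have := hlb _ hx; lra.
have hne : exists x, (fun x => S (- x)) x by exists (- s0); rewrite Ropp_involutive.
have [m [hm1 hm2]] := completeness _ hb hne.
exists (- m); split.
  move=> s hs; have : Rle (- s) m by apply: hm1; rewrite Ropp_involutive.
  lra.
move=> b hb'.
have : Rle m (- b).
  apply: hm2 => x hx; have := hb' _ hx; lra.
lra.
Qed.

End GLB.

Theorem lemma3p9 (T : finType) (e : rel T) :
  simple_graph e -> connected_graph e -> (exists u v : T, e u v) ->
  Rle (ldimf (K2_prod_rel e)) (ldimf e).
Proof.
move=> [hsym hirr] hconn [u [v huv]].
have hex : forall x y, exists2 k, k < #|T| & within e k x y.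
  by move=> x y; apply: connect_within (hconn x y).
set E := K2_prod_rel e.
set SG := fun s => exists f, local_resolving_function e f /\ s = Rsum predT f.
set SK := fun s => exists f, local_resolving_function E f /\ s = Rsum predT f.
have f1 : local_resolving_function e (fun _ => R1).
  split; first by move=> x; lra.
  move=> x y hxy; apply: Rle_trans (@Rsum_term _ _ (fun _ => R1) x _ _); first lra.
    rewrite /Lset.
    have [h1 _ _] := @gdist_spec T e x x (hex x x).
    have -> : gdist e x x = 0 by apply: gdist_eq => //; [apply: leq_ltn_trans h1| rewrite /=].
    have [_ h2 _] := @gdist_spec T e y x (hex y x).
    apply/negP => /eqP h0; move: h2; rewrite -h0 /= => /eqP hyx.
    by move: hxy; rewrite hyx hirr.
  by move=> _; lra.
have constr : forall f, local_resolving_function e f -> exists g,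
    local_resolving_function E g /\ Rsum predT g = Rsum predT f.
  move=> f [hf0 hfr]; exists (fun p : bool * T => if p.1 then f p.2 else R0); split; last first.
    by rewrite Rsum_prod /Rsum; apply: eq_bigl.
  split.
    by move=> [[] z] /=; [apply: hf0 | lra].
  have hL : forall a x b y z, Lset E (a, x) (b, y) (true, z) =
      ((a != true) + gdist e x z != (b != true) + gdist e y z).
    by move=> a x b y z; rewrite /Lset !gdistE.
  move=> [a x] [b y]; rewrite /E /K2_prod_rel /= => /orP [/andP [hab /eqP hxy]|/andP [/eqP hab hxy]];
    rewrite Rsum_prod.
    apply: Rle_trans (hfr _ _ huv) _.
    apply: Rsum_sub; last by move=> z; have [] := hf0 z.
    move=> z _; rewrite hL hxy.
    by apply/negP => /eqP; case: a b hab => [] [] //= _; lia.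
  apply: Rle_trans (hfr _ _ hxy) _; apply: Req_le; rewrite /Rsum; apply: eq_bigl => z.
  by rewrite hL -hab eqn_add2l.
have hnn : forall (T' : finType) (e' : rel T') s,
    (exists f, local_resolving_function e' f /\ s = Rsum predT f) -> Rle R0 s.
  move=> T' e' s [f [[hf _] ->]]; apply: Rsum_ge0 => x; by have [] := hf x.
have hG : is_glb SG (ldimf e).
  rewrite /ldimf; apply: epsilon_spec; apply: glb_ex; last exact: hnn.
  by exists (Rsum predT (fun _ : T => R1)), (fun _ => R1).
have hK : is_glb SK (ldimf E).
  rewrite /ldimf; apply: epsilon_spec; apply: glb_ex; last exact: hnn.
  have [g [hg _]] := constr _ f1.
  by exists (Rsum predT g), g.
apply: (proj2 hG) => s [f [hf ->]].
have [g [hg <-]] := constr _ hf.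
apply: (proj1 hK); by exists g.
Qed.
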